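(* Suppose that $2\le n_0<\infty$ and that $S$ is submultiplicative on $[1,n_0]$. Then for every $\varepsilon>0$ and every $N_0>n_0$ there exists an extension of $S$ to $[1,N_0]$ which is submultiplicative on $[1,N_0]$ and satisfies $S(N_0)<S(n_0)+\varepsilon$.
   Context: Let $2\le n_0\le\infty$ and let $S$ be a real-valued function on $[1,n_0]$ (on $[1,\infty)$ if $n_0=\infty$). $S$ is called submultiplicative on $[1,n_0]$ if: (a) $S$ is piecewise-linear, continuous, strictly increasing and concave; (b) $S(x)=x$ for $1\le x\le 2$; (c) $S(xy)\le S(x)S(y)$ for all $x,y$ with $1\le x,y,xy\le n_0$. *)

(* Defs.v *)
From Stdlib Require Import Reals Lra.
Open Scope R_scope.

Definition piecewise_linear_on (a b : R) (f : R -> R) : Prop :=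
  exists (k : nat) (x : nat -> R),
    x O = a /\ x k = b /\
    (forall i : nat, (i < k)%nat -> x i < x (S i)) /\
    (forall i : nat, (i < k)%nat ->
       exists c d : R, forall t : R, x i <= t <= x (S i) -> f t = c * t + d).

Definition continuous_on_interval (a b : R) (f : R -> R) : Prop :=
  forall x : R, a <= x <= b ->
    forall eps : R, eps > 0 -> exists delta : R, delta > 0 /\
      forall y : R, a <= y <= b -> Rabs (y - x) < delta -> Rabs (f y - f x) < eps.

Definition strictly_increasing_on (a b : R) (f : R -> R) : Prop :=
  forall x y : R, a <= x <= b -> a <= y <= b -> x < y -> f x < f y.

Definition concave_on (a b : R) (f : R -> R) : Prop :=
  forall x y t : R, a <= x <= b -> a <= y <= b -> 0 <= t <= 1 ->
    t * f x + (1 - t) * f y <= f (t * x + (1 - t) * y).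

Definition submultiplicative_on (n0 : R) (S : R -> R) : Prop :=
  piecewise_linear_on 1 n0 S /\
  continuous_on_interval 1 n0 S /\
  strictly_increasing_on 1 n0 S /\
  concave_on 1 n0 S /\
  (forall x : R, 1 <= x <= 2 -> S x = x) /\
  (forall x y : R, 1 <= x -> 1 <= y -> x * y <= n0 -> S (x * y) <= S x * S y).

(* Main.v *)
Require Import Defs.
From Stdlib Require Import Reals Lra Lia Psatz Arith.
Open Scope R_scope.
Lemma three_pt (a b : R) (f : R -> R) : concave_on a b f ->
  forall x z y, a <= x -> y <= b -> x < z -> z < y ->
  (f z - f x) * (y - z) >= (f y - f z) * (z - x).
Proof.
  intros H x z y Hax Hyb Hxz Hzy.
  set (t := (y - z) / (y - x)).
  assert (Ht : 0 <= t <= 1).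
  { unfold t; split.
    - unfold Rdiv; apply Rmult_le_pos; [lra|]; left; apply Rinv_0_lt_compat; lra.
    - apply (Rmult_le_reg_r (y - x)); [lra|]. unfold Rdiv. rewrite Rmult_assoc, Rinv_l by lra. lra. }
  assert (Hz : t * x + (1 - t) * y = z) by (unfold t; field; lra).
  specialize (H x y t ltac:(lra) ltac:(lra) Ht). rewrite Hz in H.
  assert (Ht1 : t * (y - x) = y - z) by (unfold t; field; lra).
  assert (H2 : (t * f x + (1 - t) * f y) * (y - x) <= f z * (y - x)).
  { apply Rmult_le_compat_r; lra. }
  assert (E : (1 - t) * (y - x) = z - x) by lra.
  nra.
Qed.

Lemma from_three_pt (a b : R) (f : R -> R) :
  (forall x z y, a <= x -> y <= b -> x < z -> z < y ->
    (f z - f x) * (y - z) >= (f y - f z) * (z - x)) -> concave_on a b f.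
Proof.
  intros H x y t Hx Hy Ht.
  destruct (Req_dec t 0) as [->|Ht0].
  { replace (0 * x + (1 - 0) * y) with y by ring. lra. }
  destruct (Req_dec t 1) as [->|Ht1].
  { replace (1 * x + (1 - 1) * y) with x by ring. lra. }
  destruct (Rtotal_order x y) as [Hxy|[Hxy|Hxy]].
  - set (z := t * x + (1 - t) * y).
    assert (E1 : y - z = t * (y - x)) by (unfold z; ring).
    assert (E2 : z - x = (1 - t) * (y - x)) by (unfold z; ring).
    assert (Hxz : x < z) by nra. assert (Hzy : z < y) by nra.
    specialize (H x z y ltac:(lra) ltac:(lra) Hxz Hzy).
    rewrite E1, E2 in H.
    assert (H' : (t * (f z - f x) - (1 - t) * (f y - f z)) * (y - x) >= 0) by nra.
    assert (t * (f z - f x) - (1 - t) * (f y - f z) >= 0).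
    { destruct (Rge_dec (t * (f z - f x) - (1 - t) * (f y - f z)) 0); [auto|]. nra. }
    nra.
  - subst y. replace (t * x + (1 - t) * x) with x by ring. lra.
  - set (z := t * x + (1 - t) * y).
    assert (E1 : x - z = (1 - t) * (x - y)) by (unfold z; ring).
    assert (E2 : z - y = t * (x - y)) by (unfold z; ring).
    assert (Hxz : y < z) by nra. assert (Hzy : z < x) by nra.
    specialize (H y z x ltac:(lra) ltac:(lra) Hxz Hzy).
    rewrite E1, E2 in H.
    assert (H' : ((1 - t) * (f z - f y) - t * (f x - f z)) * (x - y) >= 0) by nra.
    assert ((1 - t) * (f z - f y) - t * (f x - f z) >= 0).
    { destruct (Rge_dec ((1 - t) * (f z - f y) - t * (f x - f z)) 0); [auto|]. nra. }
    nra.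
Qed.
Theorem lemma2p3 (n0 : R) (S : R -> R) :
  2 <= n0 -> submultiplicative_on n0 S ->
  forall eps N0 : R, eps > 0 -> N0 > n0 ->
    exists T : R -> R,
      (forall x : R, 1 <= x <= n0 -> T x = S x) /\
      submultiplicative_on N0 T /\
      T N0 < S n0 + eps.
Proof.
  intros Hn0 [Hpl [Hcont [Hinc [Hconc [Hid Hmul]]]]] eps N0 Heps HN0.
  destruct Hpl as [k [xs [Hx0 [Hxk [Hxinc Haff]]]]].
  assert (Hmono : forall i j, (i <= j <= k)%nat -> xs i <= xs j).
  { intros i j [Hij Hjk]. induction Hij; [lra|].
    specialize (IHHij ltac:(lia)). specialize (Hxinc m ltac:(lia)). lra. }
  destruct k as [|k'].
  { exfalso. rewrite Hx0 in Hxk. lra. }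
  set (p := xs k').
  assert (Hp1 : 1 <= p) by (rewrite <- Hx0; apply Hmono; lia).
  assert (Hpn : p < n0) by (rewrite <- Hxk; apply Hxinc; lia).
  destruct (Haff k' ltac:(lia)) as [m [d Hmd]].
  rewrite Hxk in Hmd. fold p in Hmd.
  assert (HS1 : S 1 = 1) by (apply Hid; lra).
  assert (Hm : m > 0).
  { assert (S p < S n0) by (apply Hinc; lra).
    rewrite (Hmd p), (Hmd n0) in H by lra. nra. }
  assert (Hch0 : forall u, 1 <= u < n0 -> S n0 - S u >= m * (n0 - u)).
  { intros u Hu. destruct (Rle_dec p u).
    - rewrite (Hmd u), (Hmd n0) by lra. lra.
    - pose proof (three_pt 1 n0 S Hconc u p n0 ltac:(lra) ltac:(lra) ltac:(lra) Hpn) as H3.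
      rewrite (Hmd p), (Hmd n0) in * by lra.
      assert (H4 : (m * p + d - S u - m * (p - u)) * (n0 - p) >= 0) by nra.
      assert (m * p + d - S u - m * (p - u) >= 0).
      { destruct (Rge_dec (m * p + d - S u - m * (p - u)) 0); [auto|]. nra. }
      nra. }
  assert (Hch : forall u v, 1 <= u -> u < v -> v <= n0 -> S v - S u >= m * (v - u)).
  { intros u v Hu Huv Hv. destruct (Req_dec v n0) as [->|Hvn]; [apply Hch0; lra|].
    pose proof (three_pt 1 n0 S Hconc u v n0 ltac:(lra) ltac:(lra) Huv ltac:(lra)) as H3.
    pose proof (Hch0 v ltac:(lra)).
    assert (H4 : (S v - S u - m * (v - u)) * (n0 - v) >= 0) by nra.
    destruct (Rge_dec (S v - S u - m * (v - u)) 0); [lra|]. nra. }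
  assert (HSge1 : forall y, 1 <= y <= n0 -> S y >= 1).
  { intros y Hy. destruct (Req_dec y 1) as [->|]; [lra|].
    pose proof (Hch 1 y ltac:(lra) ltac:(lra) ltac:(lra)). nra. }
  assert (HSn0 : S n0 - 1 >= m * (n0 - 1)) by (pose proof (Hch 1 n0 ltac:(lra) ltac:(lra) ltac:(lra)); lra).
  assert (HS2 : S n0 >= 2).
  { destruct (Req_dec n0 2) as [->|]. { rewrite (Hid 2) by lra. lra. }
    assert (S 2 < S n0) by (apply Hinc; lra). rewrite (Hid 2) in H0 by lra. lra. }
  assert (Hdel : exists de, 0 < de /\ de * N0 * (N0 - 1) <= m /\ de * N0 <= 1 /\
                 de * (N0 - n0) < eps).
  { set (a := m / (N0 * (N0 - 1))). set (b := 1 / N0). set (c := eps / (2 * (N0 - n0))).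
    assert (Ha : 0 < a) by (unfold a; apply Rdiv_lt_0_compat; nra).
    assert (Hb : 0 < b) by (unfold b; apply Rdiv_lt_0_compat; lra).
    assert (Hc : 0 < c) by (unfold c; apply Rdiv_lt_0_compat; lra).
    assert (Ea : a * (N0 * (N0 - 1)) = m) by (unfold a; field; split; lra).
    assert (Eb : b * N0 = 1) by (unfold b; field; lra).
    assert (Ec : c * (2 * (N0 - n0)) = eps) by (unfold c; field; lra).
    exists (Rmin (Rmin a b) c).
    pose proof (Rmin_l (Rmin a b) c). pose proof (Rmin_r (Rmin a b) c).
    pose proof (Rmin_l a b). pose proof (Rmin_r a b).
    set (de := Rmin (Rmin a b) c) in *.
    assert (0 < de) by (unfold de; apply Rmin_glb_lt; [apply Rmin_glb_lt|]; lra).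
    repeat split; auto; nra. }
  destruct Hdel as [de [Hde [Hde1 [Hde2 Hde3]]]].
  assert (HN1 : N0 - 1 >= 1) by lra.
  assert (HdeN : de * N0 <= m) by nra.
  assert (Hdem : de <= m) by nra.
  set (T := fun u => if Rle_dec u n0 then S u else S n0 + de * (u - n0)).
  assert (Tle : forall u, u <= n0 -> T u = S u).
  { intros u Hu. unfold T. destruct (Rle_dec u n0); [auto|lra]. }
  assert (Tgt : forall u, n0 <= u -> T u = S n0 + de * (u - n0)).
  { intros u Hu. unfold T. destruct (Rle_dec u n0); [|auto].
    assert (u = n0) by lra. subst u. ring. }
  assert (Tlow : forall y, 1 <= y <= N0 -> T y - 1 >= de * N0 * (y - 1) /\ T y >= 1).
  { intros y Hy. destruct (Rle_dec y n0).
    - rewrite Tle by lra. destruct (Req_dec y 1) as [->|]. { rewrite HS1. split; nra. }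
      pose proof (Hch 1 y ltac:(lra) ltac:(lra) ltac:(lra)). split; nra.
    - rewrite Tgt by lra.
      assert (m * (n0 - 1) >= m) by nra.
      assert (de * N0 * (y - 1) <= de * N0 * (N0 - 1)) by (apply Rmult_le_compat_l; nra).
      assert (de * (y - n0) >= 0) by nra.
      split; lra. }
  exists T. split; [|split].
  - intros x Hx. apply Tle; lra.
  - split; [|split; [|split; [|split; [|split]]]].
    +
      exists (Datatypes.S (Datatypes.S k')), (fun i => if Compare_dec.le_lt_dec i (Datatypes.S k') then xs i else N0).
      split; [simpl; auto|]. split.
      { destruct (Compare_dec.le_lt_dec (Datatypes.S (Datatypes.S k')) (Datatypes.S k')); [lia|auto]. }
      split.
      * intros i Hi. destruct (Compare_dec.le_lt_dec i (Datatypes.S k')); [|lia].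
        destruct (Compare_dec.le_lt_dec (Datatypes.S i) (Datatypes.S k')).
        -- apply Hxinc; lia.
        -- assert (i = Datatypes.S k') by lia. subst i. lra.
      * intros i Hi. destruct (Compare_dec.le_lt_dec i (Datatypes.S k')); [|lia].
        destruct (Compare_dec.le_lt_dec (Datatypes.S i) (Datatypes.S k')).
        -- destruct (Haff i ltac:(lia)) as [c0 [d0 Hcd]]. exists c0, d0.
           intros t Ht. assert (xs (Datatypes.S i) <= n0) by (rewrite <- Hxk; apply Hmono; lia).
           rewrite Tle by lra. apply Hcd; lra.
        -- assert (i = Datatypes.S k') by lia. subst i. rewrite Hxk.
           exists de, (S n0 - de * n0). intros t Ht. rewrite Tgt by lra. ring.
    +
      intros x Hx e He.
      destruct (Rtotal_order x n0) as [Hxn|[Hxn|Hxn]].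
      * destruct (Hcont x ltac:(lra) e He) as [d0 [Hd0 Hd]].
        exists (Rmin d0 (n0 - x)). split. { apply Rmin_glb_lt; lra. }
        intros y Hy Hyx. pose proof (Rmin_l d0 (n0 - x)). pose proof (Rmin_r d0 (n0 - x)).
        apply Rabs_def2 in Hyx. destruct Hyx.
        rewrite !Tle by lra. apply Hd; [lra|]. apply Rabs_def1; lra.
      * subst x. destruct (Hcont n0 ltac:(lra) e He) as [d0 [Hd0 Hd]].
        assert (Hed : 0 < e / de) by (apply Rdiv_lt_0_compat; lra).
        assert (Eed : de * (e / de) = e) by (field; lra).
        exists (Rmin d0 (e / de)). split. { apply Rmin_glb_lt; lra. }
        intros y Hy Hyx. pose proof (Rmin_l d0 (e / de)). pose proof (Rmin_r d0 (e / de)).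
        apply Rabs_def2 in Hyx. destruct Hyx.
        destruct (Rle_dec y n0).
        -- rewrite !Tle by lra. apply Hd; [lra|]. apply Rabs_def1; lra.
        -- rewrite !Tgt by lra. apply Rabs_def1; nra.
      * assert (Hed : 0 < e / de) by (apply Rdiv_lt_0_compat; lra).
        assert (Eed : de * (e / de) = e) by (field; lra).
        exists (Rmin (e / de) (x - n0)). split. { apply Rmin_glb_lt; lra. }
        intros y Hy Hyx. pose proof (Rmin_l (e / de) (x - n0)). pose proof (Rmin_r (e / de) (x - n0)).
        apply Rabs_def2 in Hyx. destruct Hyx.
        rewrite !Tgt by lra. apply Rabs_def1; nra.
    +
      intros x y Hx Hy Hxy.
      destruct (Rle_dec y n0).
      * rewrite !Tle by lra. apply Hinc; lra.
      * rewrite (Tgt y) by lra. destruct (Rle_dec x n0).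
        -- rewrite Tle by lra. destruct (Req_dec x n0) as [->|]; [nra|].
           assert (S x < S n0) by (apply Hinc; lra). nra.
        -- rewrite Tgt by lra. nra.
    +
      apply from_three_pt. intros x z y Hx Hy Hxz Hzy.
      destruct (Rle_dec y n0).
      * rewrite !Tle by lra. apply (three_pt 1 n0 S Hconc); lra.
      * destruct (Rle_dec n0 x).
        -- rewrite !Tgt by lra. apply Req_ge. ring.
        -- rewrite (Tle x) by lra. rewrite (Tgt y) by lra.
           destruct (Rtotal_order z n0) as [Hzn|[Hzn|Hzn]].
           ++ rewrite Tle by lra.
              pose proof (three_pt 1 n0 S Hconc x z n0 ltac:(lra) ltac:(lra) Hxz Hzn) as H3.
              pose proof (Hch0 z ltac:(lra)) as H4.
              assert (H4' : S n0 - S z >= de * (n0 - z)) by nra.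
              assert (H5' : (S n0 - S z) * (z - x) >= de * (n0 - z) * (z - x)).
              { apply Rle_ge. apply Rmult_le_compat_r; lra. }
              assert (H5 : (S z - S x) * (n0 - z) >= de * (n0 - z) * (z - x)) by lra.
              assert (H6 : S z - S x >= de * (z - x)).
              { destruct (Rge_dec (S z - S x) (de * (z - x))); [auto|]. nra. }
              nra.
           ++ subst z. rewrite Tle by lra.
              pose proof (Hch0 x ltac:(lra)) as H4.
              assert (H5 : S n0 - S x >= de * (n0 - x)) by nra.
              assert (H6 : (S n0 - S x) * (y - n0) >= de * (n0 - x) * (y - n0)).
              { apply Rle_ge. apply Rmult_le_compat_r; lra. }
              replace (S n0 + de * (y - n0) - S n0) with (de * (y - n0)) by ring. lra.
           ++ rewrite Tgt by lra.
              pose proof (Hch0 x ltac:(lra)) as H4.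
              assert (H5 : S n0 + de * (z - n0) - S x >= de * (z - x)) by nra.
              assert (H6 : (S n0 + de * (z - n0) - S x) * (y - z) >= de * (z - x) * (y - z)).
              { apply Rle_ge. apply Rmult_le_compat_r; lra. }
              replace (S n0 + de * (y - n0) - (S n0 + de * (z - n0))) with (de * (y - z)) by ring. lra.
    +
      intros x Hx. rewrite Tle by lra. apply Hid; lra.
    +
      assert (Hcase : forall x y, 1 <= x -> 1 <= y -> x * y <= N0 -> n0 < x ->
                T (x * y) <= T x * T y).
      { intros x y Hx Hy Hxy Hxn.
        assert (x <= N0) by nra. assert (y <= N0) by nra.
        destruct (Tlow y ltac:(lra)) as [L1 L2].
        rewrite (Tgt x), (Tgt (x * y)) by nra.
        set (Ty := T y) in *.
        assert (E : (S n0 + de * (x - n0)) * Ty - (S n0 + de * (x * y - n0)) =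
                    (Ty - 1) * (S n0 - de * n0) + de * x * (Ty - y)) by ring.
        assert (de * n0 <= 1) by nra.
        assert (A1 : (Ty - 1) * (S n0 - de * n0) >= Ty - 1) by nra.
        assert (A2 : de * x * (Ty - y) >= - (de * N0 * (y - 1))).
        { assert (de * x * (y - 1) <= de * N0 * (y - 1)).
          { apply Rmult_le_compat_r; [lra|]. apply Rmult_le_compat_l; lra. }
          assert (de * x * (Ty - 1) >= 0).
          { apply Rle_ge. apply Rmult_le_pos; [apply Rmult_le_pos|]; lra. }
          replace (de * x * (Ty - y)) with (de * x * (Ty - 1) - de * x * (y - 1)) by ring. lra. }
        lra. }
      intros x y Hx Hy Hxy.
      destruct (Rlt_dec n0 x) as [Hxn|Hxn]; [apply Hcase; auto|].
      destruct (Rlt_dec n0 y) as [Hyn|Hyn].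
      { rewrite Rmult_comm, (Rmult_comm (T x)). apply Hcase; auto. rewrite Rmult_comm; auto. }
      rewrite (Tle x), (Tle y) by lra.
      destruct (Rle_dec (x * y) n0).
      * rewrite Tle by lra. apply Hmul; auto.
      * rewrite Tgt by lra.
        set (x' := n0 / y).
        assert (Ex : x' * y = n0) by (unfold x'; field; lra).
        assert (Hx'1 : 1 <= x') by (apply (Rmult_le_reg_r y); [lra|]; rewrite Ex; lra).
        assert (Hx'x : x' < x) by nra.
        pose proof (Hmul x' y Hx'1 Hy ltac:(lra)) as Hm1. rewrite Ex in Hm1.
        pose proof (Hch x' x Hx'1 Hx'x ltac:(lra)) as Hc1.
        pose proof (HSge1 y ltac:(lra)) as Hy1.
        assert (E2 : de * (x * y - n0) = de * y * (x - x')) by (unfold x'; field; lra).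
        assert (de * y <= m) by nra.
        assert (de * y * (x - x') <= m * (x - x')) by (apply Rmult_le_compat_r; lra).
        assert (HH : (S x - S x') * S y >= S x - S x').
        { assert (S x - S x' >= 0) by nra.
          replace (S x - S x') with ((S x - S x') * 1) at 2 by ring.
          apply Rle_ge, Rmult_le_compat_l; lra. }
        replace (S x * S y) with (S x' * S y + (S x - S x') * S y) by ring.
        lra.
  - rewrite Tgt by lra. lra.
Qed.
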